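(* Let $\Phi$ be the set of formulas of $NOM$, preordered by $\phi\le\psi$ iff $\phi\vdash\psi$ is derivable in $NOM$, let $\mathcal L$ be the partially ordered quotient obtained by identifying $\phi$ and $\psi$ when $\phi\le\psi$ and $\psi\le\phi$, with quotient map $[\,\cdot\,]:\Phi\to\mathcal L$, and let $\neg[\phi]=[\neg\phi]$ (this is a well-defined order-reversing involution). Then $(\mathcal L,\le,\neg)$ is an orthomodular lattice, and for all formulas $\phi,\psi$: $[\phi\wedge\psi]=[\phi]\wedge[\psi]$, $[\phi\rightarrow\psi]=[\phi]\rightarrow[\psi]$ (Sasaki arrow), and $[\neg\phi]=\neg[\phi]$.
   Context: The propositional deductive system $NOM$: formulas are built from propositional letters using $\wedge$, $\rightarrow$, $\neg$. Sequents are $\phi_1,\ldots,\phi_n\vdash\psi$ ($n\ge0$) with antecedent a finite ordered sequence. With $\Gamma$ a finite possibly empty sequence of formulas and $\phi,\psi,\chi$ formulas, the rules of $NOM$ are: (assumption) $\Gamma,\phi\vdash\phi$; (cut) $\Gamma\vdash\phi$, $\Gamma,\phi\vdash\psi$ $\Rightarrow$ $\Gamma\vdash\psi$; (paste) $\Gamma\vdash\phi$, $\Gamma\vdash\psi$ $\Rightarrow$ $\Gamma,\phi\vdash\psi$; (compatible exchange) $\Gamma,\phi,\psi\vdash\phi$, $\Gamma,\phi,\psi\vdash\chi$, $\Gamma,\psi,\phi\vdash\psi$ $\Rightarrow$ $\Gamma,\psi,\phi\vdash\chi$; ($\wedge$-intro) $\Gamma\vdash\phi$, $\Gamma\vdash\psi$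 $\Rightarrow$ $\Gamma\vdash\phi\wedge\psi$; ($\wedge$-elim) $\Gamma\vdash\phi\wedge\psi$ $\Rightarrow$ $\Gamma\vdash\phi$ and $\Rightarrow$ $\Gamma\vdash\psi$; ($\rightarrow$-intro) $\Gamma,\phi\vdash\psi$ $\Rightarrow$ $\Gamma\vdash\phi\rightarrow\psi$; ($\rightarrow$-elim) $\Gamma\vdash\phi\rightarrow\psi$ $\Rightarrow$ $\Gamma,\phi\vdash\psi$; (excluded middle) $\Gamma,\phi\vdash\psi$, $\Gamma,\neg\phi\vdash\psi$ $\Rightarrow$ $\Gamma\vdash\psi$; (explosion) $\Gamma\vdash\neg\phi$ $\Rightarrow$ $\Gamma,\phi\vdash\psi$. An orthomodular lattice is a bounded lattice with an order-reversing involution $\neg$ satisfying $a\wedge\neg a=\bot$, $a\vee\neg a=\top$, and $a\le b\Rightarrow a\vee(\neg a\wedge b)=b$; in it $a\rightarrow b=\neg a\vee(a\wedge b)$. *)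

(* Defs.v *)
From Stdlib Require Import List.
Import ListNotations.

Inductive form : Type :=
| Var : nat -> form
| And : form -> form -> form
| Imp : form -> form -> form
| Neg : form -> form.

(* der G f  :  the sequent  G |- f  is derivable in NOM.
   The antecedent is an ordered list; "G, phi" is  G ++ [phi]. *)
Inductive der : list form -> form -> Prop :=
| r_assumption : forall G phi, der (G ++ [phi]) phi
| r_cut : forall G phi psi, der G phi -> der (G ++ [phi]) psi -> der G psi
| r_paste : forall G phi psi, der G phi -> der G psi -> der (G ++ [phi]) psi
| r_cexch : forall G phi psi chi,
    der (G ++ [phi; psi]) phi -> der (G ++ [phi; psi]) chi ->
    der (G ++ [psi; phi]) psi -> der (G ++ [psi; phi]) chi
| r_andI : forall G phi psi, der G phi -> der G psi -> der G (And phi psi)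
| r_andE1 : forall G phi psi, der G (And phi psi) -> der G phi
| r_andE2 : forall G phi psi, der G (And phi psi) -> der G psi
| r_impI : forall G phi psi, der (G ++ [phi]) psi -> der G (Imp phi psi)
| r_impE : forall G phi psi, der G (Imp phi psi) -> der (G ++ [phi]) psi
| r_em : forall G phi psi, der (G ++ [phi]) psi -> der (G ++ [Neg phi]) psi -> der G psi
| r_explosion : forall G phi psi, der G (Neg phi) -> der (G ++ [phi]) psi.

Definition fle (phi psi : form) : Prop := der [phi] psi.

Definition feqv (phi psi : form) : Prop := fle phi psi /\ fle psi phi.

Definition L : Type := { P : form -> Prop | exists phi, P = feqv phi }.

Definition cls (phi : form) : L :=
  exist (fun P => exists phi0, P = feqv phi0) (feqv phi) (ex_intro _ phi eq_refl).

Definition Lle (A B : L) : Prop :=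
  forall phi psi, proj1_sig A phi -> proj1_sig B psi -> fle phi psi.

Definition is_OML {T : Type} (le : T -> T -> Prop) (neg : T -> T)
  (meet join : T -> T -> T) (bot top : T) : Prop :=
  (forall a, le a a) /\
  (forall a b c, le a b -> le b c -> le a c) /\
  (forall a b, le a b -> le b a -> a = b) /\
  (forall a b, le (meet a b) a) /\
  (forall a b, le (meet a b) b) /\
  (forall a b c, le c a -> le c b -> le c (meet a b)) /\
  (forall a b, le a (join a b)) /\
  (forall a b, le b (join a b)) /\
  (forall a b c, le a c -> le b c -> le (join a b) c) /\
  (forall a, le bot a) /\
  (forall a, le a top) /\
  (forall a b, le a b -> le (neg b) (neg a)) /\
  (forall a, neg (neg a) = a) /\
  (forall a, meet a (neg a) = bot) /\
  (forall a, join a (neg a) = top) /\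
  (forall a b, le a b -> join a (meet (neg a) b) = b).

Definition sasaki {T : Type} (neg : T -> T) (meet join : T -> T -> T) (a b : T) : T :=
  join (neg a) (meet a b).

(* Main.v *)
Require Import Defs.
From Stdlib Require Import List FunctionalExtensionality PropExtensionality ProofIrrelevance ClassicalEpsilon.
Import ListNotations.

Ltac fx := first [solve [auto] | rewrite <- app_assoc; solve [auto] | rewrite app_assoc; solve [auto]].

Lemma weak : forall G f, der G f -> forall K, der (K ++ G) f.
Proof.
  induction 1; intros K.
  - rewrite app_assoc; apply r_assumption.
  - apply r_cut with phi; fx.
  - rewrite app_assoc; apply r_paste; fx.
  - rewrite app_assoc; apply r_cexch; fx.
  - apply r_andI; fx.
  - eapply r_andE1; eauto.
  - eapply r_andE2; eauto.
  - apply r_impI; fx.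
  - rewrite app_assoc; apply r_impE; fx.
  - apply r_em with phi; fx.
  - rewrite app_assoc; apply r_explosion; fx.
Qed.

Definition inc G := forall f, der G f.

Lemma thm_in : forall G f, der [] f -> der G f.
Proof. intros G f H. pose proof (weak _ _ H G) as H'. rewrite app_nil_r in H'. exact H'. Qed.

Lemma wk_trick : forall G y c, fle y c -> der (G ++ [y]) c.
Proof. intros G y c H. apply r_impE. apply thm_in. exact (r_impI [] y c H). Qed.

Lemma trans_ctx : forall G b c, der G b -> fle b c -> der G c.
Proof. intros G b c H1 H2. apply r_cut with b; auto. apply wk_trick; auto. Qed.

Lemma fle_refl : forall a, fle a a.
Proof. intro a. exact (r_assumption [] a). Qed.

Lemma fle_trans : forall a b c, fle a b -> fle b c -> fle a c.
Proof. intros. eapply trans_ctx; eauto. Qed.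

Lemma expl_inc : forall G p, der G (Neg p) -> inc (G ++ [p]).
Proof. intros G p H f. apply r_explosion; auto. Qed.

Lemma neg_intro : forall G p, inc (G ++ [p]) -> der G (Neg p).
Proof. intros G p H. apply r_em with p; auto. apply r_assumption. Qed.

Lemma inc_ext : forall G p, inc G -> inc (G ++ [p]).
Proof. intros G p H. apply expl_inc; auto. Qed.

Lemma swap_inc : forall G psi phi, der (G ++ [psi]) phi -> inc (G ++ [phi; psi]) -> inc (G ++ [psi]).
Proof.
  intros G psi phi H1 H2 f. apply r_cut with phi; auto.
  rewrite <- app_assoc; simpl.
  apply r_cexch; auto.
  pose proof (r_paste (G ++ [psi]) phi psi H1 (r_assumption G psi)) as P.
  rewrite <- app_assoc in P; exact P.
Qed.

Lemma DN1 : forall a, fle (Neg (Neg a)) a.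
Proof.
  intro a. unfold fle. apply r_em with a.
  - exact (r_assumption [Neg (Neg a)] a).
  - exact (r_explosion [Neg (Neg a)] (Neg a) a (r_assumption [] (Neg (Neg a)))).
Qed.

Lemma DN2 : forall a, fle a (Neg (Neg a)).
Proof.
  intro a. unfold fle. apply (r_impE [] a (Neg (Neg a))).
  apply r_em with (Neg a).
  - apply r_impI. exact (r_explosion [Neg a] a _ (r_assumption [] (Neg a))).
  - apply r_impI. exact (r_paste [Neg (Neg a)] a (Neg (Neg a)) (DN1 a) (r_assumption [] _)).
Qed.

Lemma contra : forall x z, fle x z -> fle (Neg z) (Neg x).
Proof.
  intros x z H. unfold fle. apply r_em with x.
  - apply (swap_inc [Neg z] x z).
    + apply wk_trick; auto.
    + apply (inc_ext ([Neg z] ++ [z])). apply expl_inc. exact (r_assumption [] _).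
  - exact (r_assumption [Neg z] _).
Qed.

Lemma bot_le : forall p f, fle (And p (Neg p)) f.
Proof.
  intros p f. unfold fle. apply r_cut with p.
  - eapply r_andE1. exact (r_assumption [] _).
  - apply r_explosion. eapply r_andE2. exact (r_assumption [] _).
Qed.

Lemma le_top : forall t g, (forall f, fle t f) -> fle g (Neg t).
Proof. intros t g H. eapply fle_trans. apply DN2. apply contra. auto. Qed.

Lemma and_le1 : forall a b, fle (And a b) a.
Proof. intros. eapply r_andE1. exact (r_assumption [] _). Qed.
Lemma and_le2 : forall a b, fle (And a b) b.
Proof. intros. eapply r_andE2. exact (r_assumption [] _). Qed.
Lemma and_glb : forall a b c, fle c a -> fle c b -> fle c (And a b).
Proof. intros. apply r_andI; auto. Qed.

Lemma imp_char1 : forall a b, fle (Imp a b) (Neg (And a (Neg (And a b)))).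
Proof.
  intros a b. set (u := And a (Neg (And a b))). unfold fle.
  apply neg_intro.
  apply (swap_inc [Imp a b] u a).
  - apply wk_trick. apply and_le1.
  - apply (expl_inc [Imp a b; a] u).
    apply trans_ctx with (And a b).
    + apply r_andI.
      * exact (r_assumption [Imp a b] a).
      * exact (r_impE [Imp a b] a b (r_assumption [] _)).
    + eapply fle_trans. apply DN2. apply contra. apply and_le2.
Qed.

Lemma imp_char2 : forall a b, fle (Neg (And a (Neg (And a b)))) (Imp a b).
Proof.
  intros a b. set (u := And a (Neg (And a b))). set (nu := Neg u).
  set (ni := Neg (Imp a b)).
  assert (Hi : inc [ni; Imp a b]) by (apply (expl_inc [ni]); exact (r_assumption [] _)).
  assert (A1 : inc [ni; Neg a]).
  { apply (swap_inc [ni] (Neg a) (Imp a b)).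
    - apply r_impI. exact (r_explosion [ni; Neg a] a b (r_assumption [ni] _)).
    - exact (inc_ext [ni; Imp a b] (Neg a) Hi). }
  assert (A2 : inc [ni; And a b]).
  { apply (swap_inc [ni] (And a b) (Imp a b)).
    - apply r_impI. apply (r_paste [ni; And a b] a b).
      + eapply r_andE1. exact (r_assumption [ni] _).
      + eapply r_andE2. exact (r_assumption [ni] _).
    - exact (inc_ext [ni; Imp a b] _ Hi). }
  assert (B : der [nu; ni] u).
  { apply r_andI.
    - apply r_em with a.
      + exact (r_assumption [nu; ni] a).
      + exact (weak _ _ (A1 a) [nu]).
    - apply neg_intro. intro f. exact (weak _ _ (A2 f) [nu]). }
  assert (C : inc [nu; ni]).
  { apply (swap_inc [nu] ni u); auto.
    apply (inc_ext [nu; u]). apply (expl_inc [nu]). exact (r_assumption [] _). }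
  unfold fle. apply r_em with (Imp a b).
  - exact (r_assumption [nu] _).
  - apply C.
Qed.

Lemma lub_f : forall a b c, fle a c -> fle b c -> fle (Neg (And (Neg a) (Neg b))) c.
Proof.
  intros a b c H1 H2. eapply fle_trans; [| apply DN1].
  apply contra. apply and_glb; apply contra; auto.
Qed.

Lemma oml_f : forall a b, fle a b -> fle b (Neg (And (Neg a) (Neg (And (Neg a) b)))).
Proof.
  intros a b H. set (w := And (Neg a) (Neg (And (Neg a) b))).
  assert (Hw : fle w (Neg b)).
  { unfold fle. apply r_cut with (Neg a).
    - eapply r_andE1. exact (r_assumption [] _).
    - apply (r_impE [w] (Neg a) (Neg b)).
      apply trans_ctx with (Neg (And (Neg a) (Neg (And (Neg a) (Neg b))))).
      + apply trans_ctx with (Neg (And (Neg a) b)).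
        * eapply r_andE2. exact (r_assumption [] _).
        * apply contra. apply and_glb; [apply and_le1|].
          eapply fle_trans; [apply and_le2|].
          eapply fle_trans; [| apply DN1].
          apply contra. apply and_glb; [apply contra; auto | apply fle_refl].
      + apply imp_char2. }
  eapply fle_trans; [apply DN2 |]. apply contra. exact Hw.
Qed.

Lemma feqv_refl : forall a, feqv a a.
Proof. split; apply fle_refl. Qed.

Lemma exist_eq : forall (P Q : form -> Prop) p q,
  P = Q -> exist (fun P => exists phi0, P = feqv phi0) P p = exist _ Q q.
Proof. intros P Q p q E. subst. f_equal. apply proof_irrelevance. Qed.

Lemma cls_eq : forall a b, feqv a b -> cls a = cls b.
Proof.
  intros a b [H1 H2]. unfold cls. apply exist_eq.
  extensionality x. apply propositional_extensionality.
  unfold feqv; split; intros [K1 K2]; split; eapply fle_trans; eauto.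
Qed.

Lemma cls_eq2 : forall a b, fle a b -> fle b a -> cls a = cls b.
Proof. intros. apply cls_eq; split; auto. Qed.

Lemma cls_inj : forall a b, cls a = cls b -> feqv a b.
Proof.
  intros a b E. apply (f_equal (@proj1_sig _ _)) in E. simpl in E.
  rewrite E. apply feqv_refl.
Qed.

Definition rep (A : L) : form := proj1_sig (constructive_indefinite_description _ (proj2_sig A)).

Lemma rep_spec : forall A, proj1_sig A = feqv (rep A).
Proof. intro A. unfold rep. destruct (constructive_indefinite_description _ _) as [x Hx]. simpl. exact Hx. Qed.

Lemma cls_rep : forall A, cls (rep A) = A.
Proof.
  intro A. pose proof (rep_spec A) as E. destruct A as [P HP]. simpl in E.
  unfold cls. apply exist_eq. symmetry. exact E.
Qed.

Lemma L_surj : forall A, exists a, A = cls a.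
Proof. intro A. exists (rep A). symmetry. apply cls_rep. Qed.

Lemma rep_cls : forall a, feqv (rep (cls a)) a.
Proof. intro a. apply cls_inj. apply cls_rep. Qed.

Lemma Lle_cls : forall a b, Lle (cls a) (cls b) <-> fle a b.
Proof.
  intros a b; split.
  - intro H. apply H; apply feqv_refl.
  - intros H phi psi [H1 H2] [H3 H4]. simpl in *.
    eapply fle_trans; [exact H2|]. eapply fle_trans; [exact H|exact H3].
Qed.

Definition negL (A : L) : L := cls (Neg (rep A)).
Definition meetL (A B : L) : L := cls (And (rep A) (rep B)).
Definition joinL (A B : L) : L := cls (Neg (And (Neg (rep A)) (Neg (rep B)))).
Definition botL : L := cls (And (Var 0) (Neg (Var 0))).
Definition topL : L := cls (Neg (And (Var 0) (Neg (Var 0)))).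

Lemma neg_cong : forall a b, feqv a b -> feqv (Neg a) (Neg b).
Proof. intros a b [H1 H2]; split; apply contra; auto. Qed.

Lemma and_cong : forall a b c d, feqv a b -> feqv c d -> feqv (And a c) (And b d).
Proof.
  intros a b c d [H1 H2] [H3 H4]; split; apply and_glb.
  - eapply fle_trans; [apply and_le1|exact H1].
  - eapply fle_trans; [apply and_le2|exact H3].
  - eapply fle_trans; [apply and_le1|exact H2].
  - eapply fle_trans; [apply and_le2|exact H4].
Qed.

Lemma negL_cls : forall a, negL (cls a) = cls (Neg a).
Proof. intro a. apply cls_eq. apply neg_cong. apply rep_cls. Qed.

Lemma meetL_cls : forall a b, meetL (cls a) (cls b) = cls (And a b).
Proof. intros a b. apply cls_eq. apply and_cong; apply rep_cls. Qed.

Lemma joinL_cls : forall a b, joinL (cls a) (cls b) = cls (Neg (And (Neg a) (Neg b))).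
Proof. intros a b. apply cls_eq. apply neg_cong. apply and_cong; apply neg_cong; apply rep_cls. Qed.

Ltac dL := repeat match goal with
  | A : L |- _ => let a := fresh "a" in destruct (L_surj A) as [a ->]
  end; rewrite ?negL_cls, ?meetL_cls, ?joinL_cls, ?negL_cls, ?meetL_cls, ?joinL_cls in *.

Theorem theorem3p8 :
  exists negL : L -> L,
    (forall phi, negL (cls phi) = cls (Neg phi)) /\
    exists (meetL joinL : L -> L -> L) (botL topL : L),
      is_OML Lle negL meetL joinL botL topL /\
      (forall phi psi,
          cls (And phi psi) = meetL (cls phi) (cls psi) /\
          cls (Imp phi psi) = sasaki negL meetL joinL (cls phi) (cls psi) /\
          cls (Neg phi) = negL (cls phi)).
Proof.
  exists negL. split; [exact negL_cls|].
  exists meetL, joinL, botL, topL. split.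
  - unfold is_OML, botL, topL.
    repeat split; intros; dL; repeat rewrite Lle_cls in *.
    + apply fle_refl.
    + eapply fle_trans; eauto.
    + apply cls_eq2; auto.
    + apply and_le1.
    + apply and_le2.
    + apply and_glb; auto.
    + eapply fle_trans; [apply DN2|]. apply contra. apply and_le1.
    + eapply fle_trans; [apply DN2|]. apply contra. apply and_le2.
    + apply lub_f; auto.
    + apply bot_le.
    + apply le_top. apply bot_le.
    + apply contra; auto.
    + apply cls_eq2; [apply DN1 | apply DN2].
    + apply cls_eq2; apply bot_le.
    + apply cls_eq2; apply le_top; apply bot_le.
    + apply cls_eq2.
      * apply lub_f; auto. apply and_le2.
      * apply oml_f; auto.
  - intros phi psi. unfold sasaki. rewrite negL_cls, !meetL_cls, joinL_cls.
    split; [reflexivity|]. split; [|reflexivity].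
    apply cls_eq2.
    + eapply fle_trans; [apply imp_char1|]. apply contra.
      apply and_glb; [eapply fle_trans; [apply and_le1| apply DN1] | apply and_le2].
    + eapply fle_trans; [|apply imp_char2]. apply contra.
      apply and_glb; [eapply fle_trans; [apply and_le1| apply DN2] | apply and_le2].
Qed.
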